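(* Let $Q=\{0,\dots,n-1\}$ and consider the transition semigroups of minimal complete DFAs with state set $Q$, initial state $0$ and empty state $n-1$ accepting suffix-free languages. For $n=6$, the transition semigroup of maximum cardinality among these is unique and equals $\mathbf{W}_{\mathrm{sf}}(6)$. For $2\le n\le 5$, the transition semigroup of maximum cardinality among these is unique and equals $\mathbf{V}_{\mathrm{sf}}(n)$.
   Context: A language $L$ is suffix-free if whenever $w\in L$ and $u\in L$ with $u$ a suffix of $w$, then $u=w$. Transformations act on the right ($qt$ is the image of $q$ under $t$). The transition semigroup of a DFA is the semigroup of transformations of its state set generated by the transformations induced by its letters. A minimal complete DFA of a suffix-free language with $n\ge2$ states has exactly one empty state (a state from which no final state is reachable), labeled $n-1$. Define $\mathbf{B}_{\mathrm{sf}}(n)=\{t:Q\to Q \mid 0\notin Qt,\ (n-1)t=n-1,\ \text{and for all } j\ge1:\ 0t^j=n-1 \text{ or } 0t^j\neq qt^j \text{ for all } 0<q<n-1\}$, $\mathbf{V}_{\mathrm{sf}}(n)=\{t\in\mathbf{B}_{\mathrm{sf}}(n)\mid \text{for all } p\neq q \text{ in } Q:\ pt=qt=n-1 \text{ or } pt\neq qt\}$, and $\mathbf{W}_{\mathrm{sf}}(n)=\{t\in\mathbf{B}_{\mathrm{sf}}(n)\mid 0t=n-1 \text{ or } qt=n-1 \text{ for all } 1\le q\le n-2\}$. *)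

(* Defs.v *)
From mathcomp Require Import all_boot.
Set Implicit Arguments. Unset Strict Implicit. Unset Printing Implicit Defensive.

(* Transformations of Q = 'I_n = {0,...,n-1}; they act on the right: q t = t q. *)
Notation trans n := {ffun 'I_n -> 'I_n}.

(* A complete DFA with state set 'I_n over a finite alphabet; the initial
   state is the state with value 0 (fixed by convention, see [sf_dfa]). *)
Record DFA (n : nat) := mkDFA {
  alph : finType;
  delta : alph -> trans n;
  final : {set 'I_n}
}.

Definition run n (D : DFA n) (q : 'I_n) (w : seq (alph D)) : 'I_n :=
  foldl (fun p a => delta a p) q w.
Arguments run {n} D q w.

Definition accepts n (D : DFA n) (w : seq (alph D)) : Prop :=
  forall p : 'I_n, val p = 0 -> run D p w \in final D.
Arguments accepts {n} D w.

Definition suffix_free n (D : DFA n) : Prop :=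
  forall w u : seq (alph D), accepts D w -> accepts D u -> suffix u w -> u = w.

Definition minimal_dfa n (D : DFA n) : Prop :=
  (forall p q : 'I_n, val p = 0 -> exists w, run D p w = q) /\
  (forall p q : 'I_n, p <> q ->
     exists w, (run D p w \in final D) <> (run D q w \in final D)).

Definition empty_last n (D : DFA n) : Prop :=
  forall (q : 'I_n) w, val q = n.-1 -> run D q w \notin final D.

Definition sf_dfa n (D : DFA n) : Prop :=
  minimal_dfa D /\ empty_last D /\ suffix_free D.

Definition step n (D : DFA n) : rel (trans n) :=
  fun s s' => [exists b : alph D, s' == [ffun q => delta b (s q)]].

(* the transition semigroup: transformations induced by nonempty words *)
Definition tsg n (D : DFA n) : {set trans n} :=
  [set t | [exists a : alph D, connect (@step n D) (delta a) t]].

Definition B_sf n (t : trans n) : Prop :=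
  (forall q, val (t q) <> 0) /\
  (forall q, val q = n.-1 -> val (t q) = n.-1) /\
  (forall j, 0 < j -> forall p : 'I_n, val p = 0 ->
     val (iter j t p) = n.-1 \/
     forall q : 'I_n, 0 < val q < n.-1 -> iter j t p <> iter j t q).

Definition V_sf n (t : trans n) : Prop :=
  B_sf t /\
  forall p q : 'I_n, p <> q ->
    (val (t p) = n.-1 /\ val (t q) = n.-1) \/ t p <> t q.

Definition W_sf n (t : trans n) : Prop :=
  B_sf t /\
  forall p : 'I_n, val p = 0 ->
    val (t p) = n.-1 \/ forall q : 'I_n, 1 <= val q <= n.-2 -> val (t q) = n.-1.

Definition unique_max_tsg n (S : trans n -> Prop) : Prop :=
  exists D0 : DFA n, sf_dfa D0 /\ (forall t, t \in tsg D0 <-> S t) /\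
    forall D : DFA n, sf_dfa D ->
      #|tsg D| <= #|tsg D0| /\
      (#|tsg D| = #|tsg D0| -> forall t, t \in tsg D <-> S t).

(* Main.v *)
Require Import Defs.
From mathcomp Require Import all_boot.
Set Implicit Arguments. Unset Strict Implicit. Unset Printing Implicit Defensive.

Section Gen.
Variable n : nat.
Local Notation N := n.+2.
Definition z : 'I_N := ord0.
Definition m : 'I_N := ord_max.
Definition inM (q : 'I_N) := (q != z) && (q != m).
Definition finst : 'I_N := inord n.

Definition wtr (D : DFA N) (w : seq (alph D)) : trans N := [ffun q => run D q w].
Arguments wtr : clear implicits.
Definition tcomp (t s : trans N) : trans N := [ffun x => s (t x)].

Lemma run_cat (D : DFA N) q u v : run D q (u ++ v) = run D (run D q u) v.
Proof. by rewrite /run foldl_cat. Qed.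

Lemma connect_step (D : DFA N) x y :
  connect (@step N D) x y <-> exists w, y = [ffun q => run D (x q) w].
Proof.
split.
- move/connectP=> [p]; elim: p x => [|s p IH] x /=.
  + by move=> _ ->; exists [::]; apply/ffunP=> q; rewrite ffunE.
  + move=> /andP[/existsP[b /eqP Hs] Hp] Hy.
    have [w Hw] := IH _ Hp Hy. exists (b :: w).
    by rewrite Hw; apply/ffunP=> q; rewrite !ffunE Hs ffunE.
- move=> [w ->]; elim: w x => [|b w IH] x.
  + have -> : [ffun q => run D (x q) [::]] = x by apply/ffunP=> q; rewrite ffunE.
    exact: connect0.
  + apply: (connect_trans (y := [ffun q => delta b (x q)])).
    * by apply: connect1; apply/existsP; exists b.
    * have := IH [ffun q => delta b (x q)].
      have -> : [ffun q => run D ([ffun q0 => delta b (x q0)] q) w]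
                = [ffun q => run D (x q) (b :: w)] by apply/ffunP => q; rewrite !ffunE.
      done.
Qed.

Lemma tsgE (D : DFA N) t : t \in tsg D <-> exists a w, t = wtr D (a :: w).
Proof.
rewrite inE; split.
- move=> /existsP[a /connect_step[w ->]]; exists a, w.
  by apply/ffunP=> q; rewrite !ffunE.
- move=> [a [w ->]]; apply/existsP; exists a; apply/connect_step; exists w.
  by apply/ffunP=> q; rewrite !ffunE.
Qed.

Lemma comp_wtr (D : DFA N) u v : tcomp (wtr D u) (wtr D v) = wtr D (u ++ v).
Proof. by apply/ffunP=> q; rewrite !ffunE run_cat. Qed.

Lemma tsg_comp (D : DFA N) t s : t \in tsg D -> s \in tsg D -> tcomp t s \in tsg D.
Proof.
move=> /tsgE[a [w ->]] /tsgE[b [v ->]]; rewrite comp_wtr; apply/tsgE.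
by exists a, (w ++ b :: v).
Qed.

Definition Cord (t : trans N) : Prop :=
  t m = m /\ (forall q, t q != z) /\ (t z = m \/ forall q, inM q -> t q != t z).

Lemma zm : z != m. Proof. by rewrite -(inj_eq val_inj). Qed.

Section SF.
Variable D : DFA N.
Hypothesis HD : sf_dfa D.

Lemma accE w : accepts D w <-> run D z w \in final D.
Proof.
split; first by apply.
by move=> H p /eqP Hp; have -> : p = z by apply/val_inj/eqP.
Qed.

Lemma reach q : exists w, run D z w = q.
Proof. by case: HD => [[Hr _] _]; apply: Hr. Qed.

Lemma dist p q : p <> q -> exists w, (run D p w \in final D) <> (run D q w \in final D).
Proof. by case: HD => [[_ Hd] _]; apply: Hd. Qed.

Lemma emptym w : run D m w \notin final D.
Proof. by case: HD => [_ [He _]]; apply: He. Qed.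

Lemma delta_m (a : alph D) : delta a m = m.
Proof.
apply/eqP/negPn/negP => /eqP H.
have [w Hw] := dist H; apply: Hw.
rewrite (negbTE (emptym w)).
by have := emptym (a :: w); rewrite /= => /negbTE.
Qed.

Lemma run_m w : run D m w = m.
Proof. by elim: w => //= a w IH; rewrite delta_m. Qed.

Lemma live p : p != m -> exists w, run D p w \in final D.
Proof.
move=> /eqP H; have [w Hw] := dist H; exists w.
by move: Hw; rewrite (negbTE (emptym w)); case: (_ \in _).
Qed.

Lemma sf_suffix v u : run D z (v ++ u) \in final D -> run D z u \in final D -> v = [::].
Proof.
move=> H1 H2; have [_ [_ Hs]] := HD.
have := Hs (v ++ u) u (proj2 (accE _) H1) (proj2 (accE _) H2) (suffix_suffix _ _).
move/(congr1 size); rewrite size_cat; case: v {H1} => //= ? ? /eqP.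
by rewrite -{1}(add0n (size u)) eqn_add2r.
Qed.

Lemma wtr_Cord (a : alph D) w : Cord (wtr D (a :: w)).
Proof.
set u := a :: w.
split; first by rewrite ffunE run_m.
split.
- move=> q; apply/eqP; rewrite ffunE => Hq.
  have [v Hv] := reach q; have [x Hx] := live zm.
  have := @sf_suffix (v ++ u) x; rewrite !run_cat Hv Hq => /(_ Hx Hx).
  by case: v Hv.
- case: (eqVneq (wtr D u z) m) => [->|Hzm]; [by left | right].
  move=> q /andP[qz qm]; apply/eqP => Hq.
  have Hq' : run D q u = run D z u by move: Hq; rewrite !ffunE.
  have Hzm' : run D z u != m by move: Hzm; rewrite ffunE.
  have [v Hv] := reach q; have [x Hx] := live Hzm'.
  have := @sf_suffix v (u ++ x); rewrite !run_cat Hv Hq' => /(_ Hx Hx) Hv0.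
  by move: Hv qz; rewrite Hv0 /= => ->; rewrite eqxx.
Qed.

Lemma tsg_Cord t : t \in tsg D -> Cord t.
Proof. by move=> /tsgE[a [w ->]]; apply: wtr_Cord. Qed.

End SF.
End Gen.
Arguments wtr {n} D w.


Section Code.
Variable n : nat.
Local Notation N := n.+2.

Definition Cn (l : seq nat) : bool :=
  (nth 0 l n.+1 == n.+1) && all (fun i => nth 0 l i != 0) (iota 0 n.+2) &&
  ((nth 0 l 0 == n.+1) || all (fun q => nth 0 l q != nth 0 l 0) (iota 1 n)).
Definition grE (E : seq (nat * nat)) p r := ((p, r) \in E) || ((r, p) \in E).
Definition resp E (l : seq nat) : bool :=
  all (fun p => all (fun r => ~~ grE E p r || (nth 0 l p != nth 0 l r) || (nth 0 l p == n.+1)) (iota 1 n)) (iota 1 n).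
Definition Bc E (l : seq nat) : bool :=
  (nth 0 l 0 == n.+1) || all (fun q => (nth 0 l q == n.+1) || grE E (nth 0 l 0) (nth 0 l q)) (iota 1 n).
Definition goodN E l := Cn l && (resp E l && Bc E l).
Definition pairlist := [seq pr <- [seq (p, r) | p <- iota 1 n, r <- iota 1 n] | pr.1 < pr.2].
Fixpoint allsub (s : seq (nat * nat)) : seq (seq (nat * nat)) :=
  if s is x :: s' then let r := allsub s' in map (cons x) r ++ r else [:: [::]].
Fixpoint allseqs k (vals : seq nat) : seq (seq nat) :=
  if k is k'.+1 then [seq x :: s | x <- vals, s <- allseqs k' vals] else [:: [::]].
Definition gen := allseqs n.+2 (iota 0 n.+2).
Definition LE E := filter (goodN E) gen.
Definition checkb (Max : nat) (E0 : seq (nat * nat)) : bool :=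
  let L0 := filter Cn gen in
  all (fun E => let c := count (fun l => resp E l && Bc E l) L0 in
                (c <= Max) && ((c == Max) == (E == E0))) (allsub pairlist).

Definition code (t : trans N) : seq nat := mkseq (fun i => val (t (inord i))) N.
Lemma nth_code t (i : 'I_N) : nth 0 (code t) i = val (t i).
Proof. by rewrite nth_mkseq // inord_val. Qed.
Lemma code_inj : injective code.
Proof. by move=> t s H; apply/ffunP=> i; apply/val_inj; rewrite -!nth_code H. Qed.
Definition decode (l : seq nat) : trans N := [ffun i : 'I_N => (inord (nth 0 l i) : 'I_N)].

Lemma mem_allseqs k vals s : (s \in allseqs k vals) = (size s == k) && all (fun x => x \in vals) s.
Proof.
elim: k s => [|k IH] [|x s] //=.
- apply/negbTE/negP => /allpairsP[[a b] [_ _ /=]] //.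
- apply/allpairsP/idP => [[[a b] [/= Ha Hb [-> ->]]]|].
  + by move: Hb; rewrite IH eqSS Ha => /andP[-> ->].
  + move=> /and3P[Hs Hx Ha]; exists (x, s); split=> //=.
    by rewrite IH Ha andbT.
Qed.

Lemma uniq_allseqs k vals : uniq vals -> uniq (allseqs k vals).
Proof.
move=> Uv; elim: k => [|k IH] //=.
apply: allpairs_uniq => // [[a b] [c d]] _ _ /= [-> ->] //.
Qed.

Lemma code_gen t : code t \in gen.
Proof.
rewrite mem_allseqs size_mkseq eqxx; apply/allP => x /mapP[i _ ->].
have H : val (t (inord i)) \in iota 0 N by rewrite mem_iota add0n ltn_ord.
exact: H.
Qed.

Lemma gen_size l : l \in gen -> size l = N.
Proof. by rewrite mem_allseqs => /andP[/eqP]. Qed.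

Lemma code_decode l : l \in gen -> code (decode l) = l.
Proof.
rewrite mem_allseqs => /andP[/eqP Hs /allP Ha].
apply: (@eq_from_nth _ 0); first by rewrite size_mkseq Hs.
move=> i; rewrite size_mkseq => Hi; rewrite nth_mkseq // ffunE.
have Hi' : nat_of_ord (inord i : 'I_N) = i := inordK Hi.
rewrite Hi'; apply: inordK.
have := Ha (nth 0 l i); rewrite mem_iota add0n; apply.
by apply: mem_nth; rewrite Hs.
Qed.

Lemma valm (x : 'I_N) : (val x == n.+1) = (x == m n).
Proof. by apply/eqP/eqP => [H|->] //; apply: val_inj. Qed.
Lemma valz (x : 'I_N) : (val x == 0) = (x == z n).
Proof. by apply/eqP/eqP => [H|->] //; apply: val_inj. Qed.

Lemma allI0P (P : pred nat) : all P (iota 0 N) <-> forall i : 'I_N, P i.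
Proof.
split => [/allP H i|H]; first by apply: H; rewrite mem_iota /= ltn_ord.
by apply/allP => x; rewrite mem_iota /= => Hx; apply: (H (Ordinal Hx)).
Qed.

Lemma inM_bounds (i : 'I_N) : inM i = (0 < val i) && (val i <= n).
Proof.
rewrite /inM -valz -valm lt0n; case: i => i Hi /=; congr (_ && _).
by rewrite -ltnS ltn_neqAle -ltnS Hi andbT.
Qed.

Lemma allIMP (P : pred nat) : all P (iota 1 n) <-> forall i : 'I_N, inM i -> P i.
Proof.
split => [/allP H i|H].
- by rewrite inM_bounds => Hi; apply: H; rewrite mem_iota add1n ltnS.
- apply/allP => x; rewrite mem_iota add1n ltnS => Hx.
  have Hx' : x < N by case/andP: Hx => _ /leq_trans; apply; apply: leqW.
  by apply: (H (Ordinal Hx')); rewrite inM_bounds.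
Qed.

Lemma Cn_code t : Cn (code t) <-> Cord t.
Proof.
have E0 : nth 0 (code t) 0 = val (t (z n)) := nth_code t (z n).
have Em : nth 0 (code t) n.+1 = val (t (m n)) := nth_code t (m n).
rewrite /Cn E0 Em valm; split.
- move=> /andP[/andP[/eqP H1 /allI0P H2] H3]; split=> //; split.
  + by move=> q; have := H2 q; rewrite nth_code valz.
  + case/orP: H3 => [/eqP H|/allIMP H]; [left; apply: val_inj => //| right => q Hq].
    by have := H q Hq; rewrite nth_code (inj_eq val_inj).
- move=> [H1 [H2 H3]]; rewrite H1 eqxx /=; apply/andP; split.
  + by apply/allI0P => i; rewrite nth_code valz.
  + case: H3 => [->|H]; first by rewrite eqxx.
    by apply/orP; right; apply/allIMP => q Hq; rewrite nth_code (inj_eq val_inj) H.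
Qed.

Lemma mem_pairlist p r : ((p, r) \in pairlist) = [&& 0 < p, p < r & r <= n].
Proof.
rewrite mem_filter /=; apply/andP/idP => [[Hpr /allpairsP[[a b] [/= Ha Hb [Ea Eb]]]]|].
- move: Ha Hb; rewrite -Ea -Eb !mem_iota !add1n !ltnS => /andP[-> _] /andP[_ ->].
  by rewrite Hpr.
- case/and3P => H1 H2 H3; split=> //; apply/allpairsP; exists (p, r); split=> //=.
  + by rewrite mem_iota add1n ltnS H1 (leq_trans (ltnW H2) H3).
  + by rewrite mem_iota add1n ltnS H3 (ltn_trans H1 H2) andbT.
Qed.

Lemma filter_allsub (P : pred (nat * nat)) s : filter P s \in allsub s.
Proof.
elim: s => [|x s IH] //=; rewrite mem_cat; case: (P x).
- by rewrite map_f.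
- by rewrite IH orbT.
Qed.

Section Tsg.
Variable D : DFA N.
Hypothesis HD : sf_dfa D.

Definition gr (p r : nat) : bool :=
  [exists t in tsg D, (val (t (z n)) == p) && [exists q, inM q && (val (t q) == r)]].
Definition ED := [seq pr <- pairlist | gr pr.1 pr.2 || gr pr.2 pr.1].

Lemma grE_refl E x : E \in allsub pairlist -> grE E x x = false.
Proof.
have H : forall s E, E \in allsub s -> {subset E <= s}.
  elim=> [|y s IH] E0 /=; first by rewrite mem_seq1 => /eqP ->.
  rewrite mem_cat => /orP[/mapP[E' HE' ->]|HE] a.
  - rewrite inE => /orP[/eqP ->|/(IH _ HE') Ha]; by rewrite inE ?eqxx ?Ha ?orbT.
  - by move/(IH _ HE) => Ha; rewrite inE Ha orbT.
move=> /H HE; rewrite /grE orbb; apply/negP => /HE.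
by rewrite mem_pairlist ltnn andbF.
Qed.

Lemma ED_allsub : ED \in allsub pairlist.
Proof. exact: filter_allsub. Qed.

Lemma grE_ED p r : 0 < p <= n -> 0 < r <= n -> p != r -> grE ED p r = gr p r || gr r p.
Proof.
move=> /andP[p0 pn] /andP[r0 rn] pr; have E1 x y : ((x, y) \in ED) = (gr x y || gr y x) && ((x, y) \in pairlist).
  by rewrite /ED mem_filter.
rewrite /grE !E1 !mem_pairlist p0 r0 pn rn /=.
case: (ltngtP p r) => Hpr; rewrite /= ?andbT ?andbF ?orbF //; last by rewrite Hpr eqxx in pr.
by rewrite /= orbC.
Qed.

Lemma inM_val (i : 'I_N) : inM i -> 0 < val i <= n.
Proof. by rewrite inM_bounds. Qed.

Lemma resp_tsg t : t \in tsg D -> resp ED (code t).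
Proof.
move=> Ht; apply/allIMP => p Hp; apply/allIMP => r Hr; rewrite !nth_code.
case: (eqVneq p r) => [->|pr]; first by rewrite grE_refl // ED_allsub.
have pr' : val p != val r by rewrite (inj_eq val_inj).
rewrite grE_ED ?inM_val //.
have key : forall a b : 'I_N, gr a b -> t a = m n \/ t b != t a.
  move=> a b /existsP[t' /andP[Ht' /andP[/eqP Ha /existsP[q /andP[Hq /eqP Hb]]]]].
  have Ha' : t' (z n) = a by apply: val_inj.
  have Hb' : t' q = b by apply: val_inj.
  have [_ [_ HC]] := tsg_Cord HD (tsg_comp Ht' Ht).
  rewrite !ffunE Ha' in HC; case: HC => [->|HC]; [by left|right].
  by have := HC q Hq; rewrite ffunE Hb'.
rewrite (inj_eq val_inj) valm.
have H : gr p r || gr r p -> t p = m n \/ t p != t r.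
  case/orP => /key [H|H].
  - by left.
  - by right; rewrite eq_sym.
  - by case: (eqVneq (t p) (t r)) => [E|E]; [left; rewrite E | right].
  - by right.
case G: (gr p r || gr r p) => //=.
by case: (H G) => [->|->]; rewrite ?eqxx ?orbT.
Qed.

Lemma Bc_tsg t : t \in tsg D -> Bc ED (code t).
Proof.
move=> Ht; have [Hm [H0 HC]] := tsg_Cord HD Ht.
have E0 : nth 0 (code t) 0 = val (t (z n)) := nth_code t (z n).
rewrite /Bc E0 valm; case: HC => [->|HC]; first by rewrite eqxx.
case: (eqVneq (t (z n)) (m n)) => [->|Hzm]; first by [].
apply/allIMP => q Hq; rewrite nth_code valm.
case: (eqVneq (t q) (m n)) => [//|Hqm] /=.
have Hz' : inM (t (z n)) by rewrite /inM H0.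
have Hq' : inM (t q) by rewrite /inM H0.
rewrite grE_ED ?inM_val ?(inj_eq val_inj) 1?eq_sym ?HC //.
apply/orP; left; apply/existsP; exists t; rewrite Ht eqxx /=.
by apply/existsP; exists q; rewrite Hq eqxx.
Qed.

Lemma code_LE t : t \in tsg D -> code t \in LE ED.
Proof.
move=> Ht; rewrite mem_filter code_gen andbT /goodN resp_tsg // Bc_tsg // andbT.
by rewrite andbT; apply: (proj2 (Cn_code t)); apply: tsg_Cord Ht.
Qed.

End Tsg.
End Code.


Section Assemble.
Variable n : nat.
Local Notation N := n.+2.
Variable So : trans N -> Prop.
Local Notation code := (@code n).
Variables (E0 : seq (nat * nat)) (Max : nat).
Hypothesis Hcheck : checkb n Max E0.
Hypothesis HE0 : E0 \in allsub (pairlist n).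
Hypothesis HSo : forall t, So t <-> code t \in LE n E0.
Hypothesis HD0 : exists D0 : DFA N, sf_dfa D0 /\ forall t, t \in tsg D0 <-> So t.

Lemma size_LE E : size (LE n E) = count (fun l => resp n E l && Bc n E l) (filter (Cn n) (gen n)).
Proof.
rewrite size_filter count_filter; apply: eq_count => l /=.
by rewrite /goodN andbC.
Qed.

Lemma checkP E : E \in allsub (pairlist n) ->
  size (LE n E) <= Max /\ ((size (LE n E) == Max) = (E == E0)).
Proof.
move: Hcheck; rewrite /checkb => /allP H /H /andP[H1 /eqP H2].
by rewrite size_LE.
Qed.

Lemma uniq_LE E : uniq (LE n E).
Proof. by apply: filter_uniq; apply: uniq_allseqs; apply: iota_uniq. Qed.

Lemma mem_LE_gen E l : l \in LE n E -> l \in gen n.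
Proof. by rewrite mem_filter => /andP[]. Qed.

Lemma main_assemble : unique_max_tsg So.
Proof.
have [D0 [HD0sf HT0]] := HD0.
have HM : size (LE n E0) = Max by have [_] := checkP HE0; rewrite eqxx => /eqP.
have cardX : #|tsg D0| = Max.
  rewrite cardE -(size_map code) -HM; apply: perm_size; apply: uniq_perm.
  - by rewrite map_inj_uniq ?enum_uniq //; apply: code_inj.
  - exact: uniq_LE.
  - move=> l; apply/mapP/idP => [[t Ht ->]|Hl].
    + by apply/HSo/HT0; rewrite -mem_enum.
    + have Hg := mem_LE_gen Hl; exists (decode n l); last by rewrite code_decode.
      by rewrite mem_enum; apply/HT0/HSo; rewrite code_decode.
exists D0; split=> //; split=> //.
move=> D HD.
have Hsub : {subset map code (enum (tsg D)) <= LE n (ED D)}.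
  by move=> l /mapP[t Ht ->]; apply: code_LE => //; rewrite -mem_enum.
have Hu : uniq (map code (enum (tsg D))).
  by rewrite map_inj_uniq ?enum_uniq //; apply: code_inj.
have Hle : #|tsg D| <= size (LE n (ED D)).
  by rewrite cardE -(size_map code); apply: uniq_leq_size.
have [HED1 HED2] := checkP (ED_allsub D).
rewrite cardX; split; first exact: leq_trans Hle HED1.
move=> Heq.
have HsE : size (LE n (ED D)) = Max.
  by apply/eqP; rewrite eqn_leq HED1 -Heq Hle.
have HEDE : ED D = E0 by apply/eqP; rewrite -HED2 HsE.
rewrite HEDE in Hsub.
have Hsz : size (LE n E0) <= size (map code (enum (tsg D))) by rewrite size_map -cardE Heq HM.
have [_ Heqi] := uniq_min_size Hu Hsub Hsz.
move=> t; have := Heqi (code t); rewrite (mem_map (@code_inj n)) mem_enum => ->.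
by split => [/HSo|/HSo].
Qed.

End Assemble.


Section Build.
Variable n : nat.
Local Notation N := n.+2.
Local Notation z := (z n).
Local Notation m := (m n).
Local Notation fin := (finst n).
Variable So : trans N -> Prop.
Variable Sb : pred (trans N).
Hypothesis HSb : forall t, So t <-> Sb t.
Hypothesis h1 : forall t, So t -> Cord t.
Hypothesis h2 : forall t s, So t -> So s -> So (tcomp t s).
Definition eqz (q : 'I_N) : trans N := [ffun x => if x == z then q else m].
Definition gp (p : 'I_N) : trans N := [ffun x => if x == p then fin else m].
Hypothesis h3 : forall q, q != z -> So (eqz q).
Hypothesis h4 : forall p, p != m -> n != 0 -> So (gp p).

Definition A0 := {t : trans N | Sb t}.
Definition D0 : DFA N := {| alph := A0; delta := fun a => val a; final := [set fin] |}.

Lemma finm : fin != m.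
Proof.
apply/eqP => H; have := congr1 val H; rewrite /= inordK // => E.
exact: n_Sn E.
Qed.

Lemma wtr1 (a : alph D0) : wtr D0 [:: a] = val a.
Proof. by apply/ffunP => x; rewrite ffunE. Qed.

Lemma So_wtr (a : alph D0) w : So (wtr D0 (a :: w)).
Proof.
elim: w a => [|b w IH] a; first by rewrite wtr1; apply/HSb; exact: valP.
rewrite -cat1s -comp_wtr wtr1; apply: h2 => //; apply/HSb; exact: valP.
Qed.

Lemma tsgD0 t : t \in tsg D0 <-> So t.
Proof.
split; first by move/tsgE => [a [w ->]]; apply: So_wtr.
move=> H; apply/tsgE; have Hb := proj1 (HSb t) H.
by exists (@exist _ (fun t => Sb t) t Hb : A0), [::]; rewrite wtr1.
Qed.

Lemma runD0_m w : run D0 m w = m.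
Proof.
elim: w => //= a w IH.
by have [-> _] := h1 (proj2 (HSb _) (valP a)).
Qed.

Lemma accD0 w : accepts D0 w <-> run D0 z w \in final D0.
Proof.
split; first by apply.
by move=> H p /eqP Hp; have -> : p = z by apply/val_inj/eqP.
Qed.

Lemma D0_sf : sf_dfa D0.
Proof.
split; [split|split].
- move=> p q /eqP Hp; have -> : p = z by apply/val_inj/eqP.
  case: (eqVneq q z) => [->|Hq]; first by exists [::].
  have Hb := proj1 (HSb _) (h3 Hq).
  by exists [:: (@exist _ (fun t => Sb t) _ Hb : A0)]; rewrite /= ffunE eqxx.
- move=> p q pq.
  case: (eqVneq p fin) => [Hp|Hp].
    exists [::]; rewrite /= !inE Hp eqxx; case: eqP => // Hq.
    by move=> _; apply: pq; rewrite Hp Hq.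
  case: (eqVneq q fin) => [Hq|Hq].
    by exists [::]; rewrite /= !inE Hq eqxx (negbTE Hp).
  have n0 : n != 0.
    apply/negP => /eqP n0; apply: pq; apply/val_inj.
    have vf : nat_of_ord fin = n by rewrite /finst inordK.
    have Hp' : nat_of_ord p != n by apply: contra Hp => /eqP H; apply/eqP/val_inj; rewrite /= H vf.
    have Hq' : nat_of_ord q != n by apply: contra Hq => /eqP H; apply/eqP/val_inj; rewrite /= H vf.
    have lp := ltn_ord p.
    have lq := ltn_ord q.
    change (nat_of_ord p = nat_of_ord q).
    move: (nat_of_ord p) (nat_of_ord q) Hp' Hq' lp lq; rewrite n0.
    by case=> [|[|a]] [|[|b]].
  suff key : forall p q : 'I_N, p != fin -> q != fin -> p != q -> p != m ->
      exists w, (run D0 p w \in final D0) <> (run D0 q w \in final D0).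
    have pq' : p != q by apply/eqP.
    case: (eqVneq p m) => [Hpm|Hpm]; last exact: key.
    have Hqm : q != m by rewrite -Hpm eq_sym.
    have qp : q != p by rewrite eq_sym.
    have [w Hw] := key q p Hq Hp qp Hqm.
    by exists w => H; apply: Hw; rewrite H.
  move=> p' q' Hp' Hq' pq' Hpm.
  have Hb := proj1 (HSb _) (h4 Hpm n0).
  exists [:: (@exist _ (fun t => Sb t) _ Hb : A0)]; rewrite /= !ffunE eqxx eq_sym (negbTE pq').
  by rewrite !inE eqxx eq_sym (negbTE finm).
- move=> q w /= Hq; have -> : q = m by apply/val_inj.
  by rewrite runD0_m inE eq_sym finm.
- move=> w u /accD0 Hw /accD0 Hu /suffixP[v Ew].
  rewrite Ew; suff -> : v = [::] by [].
  case: v Ew Hw => [//|b v] Ew Hw; exfalso.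
  have [_ [Cv0 _]] := h1 (So_wtr b v).
  have qz : run D0 z (b :: v) != z by have := Cv0 z; rewrite ffunE.
  move: Hw; rewrite Ew run_cat inE => /eqP Hw.
  set q := run D0 z (b :: v) in qz Hw.
  have qm : q != m by apply/eqP => Hqm; move: Hw; rewrite Hqm runD0_m => /eqP; rewrite eq_sym (negbTE finm).
  clear Ew; case: u Hu Hw => [|c u] Hu Hw.
    move: Hu; rewrite /= inE => /eqP Hu.
    by move: qz; rewrite /= in Hw; rewrite Hw Hu eqxx.
  have [_ [_ Cu]] := h1 (So_wtr c u).
  move: Hu; rewrite inE => /eqP Hu.
  rewrite !ffunE Hu in Cu; case: Cu => [Hfm|Cu]; first by move: finm; rewrite Hfm eqxx.
  have := Cu q; rewrite /inM qz qm ffunE Hw eqxx.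
  by move/(_ isT).
Qed.

Lemma build : exists D : DFA N, sf_dfa D /\ forall t, t \in tsg D <-> So t.
Proof. by exists D0; split; [apply: D0_sf | apply: tsgD0]. Qed.

End Build.


Section WV.
Variable n : nat.
Local Notation N := n.+2.
Local Notation z := (z n).
Local Notation m := (m n).
Local Notation fin := (finst n).

Definition Wo (t : trans N) := Cord t /\ (t z = m \/ forall q, inM q -> t q = m).
Definition Inj (t : trans N) := forall u v, u <> v -> t u = m \/ t u <> t v.
Definition Vo (t : trans N) := t m = m /\ (forall q, t q != z) /\ Inj t.

Lemma iter_m (t : trans N) k : t m = m -> iter k t m = m.
Proof. by move=> Hm; elim: k => //= k ->. Qed.

Lemma inM_lt (q : 'I_N) : inM q -> 0 < val q < n.+1.
Proof. by rewrite ltnS -inM_bounds. Qed.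

Lemma lt_inM (q : 'I_N) : 0 < val q < n.+1 -> inM q.
Proof. by rewrite ltnS -inM_bounds. Qed.

Lemma B_Cord (t : trans N) : B_sf t -> Cord t.
Proof.
move=> [H0 [Hm Hj]]; split; first by apply/val_inj; exact: Hm (m) erefl.
split; first by move=> q; rewrite -valz; apply/eqP; exact: H0 q.
case: (Hj 1 isT z erefl) => [H|H]; [left; apply/val_inj; exact: H | right => q Hq].
by apply/eqP => E; apply: (H q (inM_lt Hq)); rewrite /= E.
Qed.

Lemma W_iff (t : trans N) : W_sf t <-> Wo t.
Proof.
split.
- move=> [HB HW]; split; first exact: B_Cord.
  case: (HW z erefl) => [H|H]; [left; apply/val_inj; exact: H | right => q Hq].
  by apply/val_inj; apply: H; move: Hq; rewrite inM_bounds.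
- move=> [[Hm [H0 HC]] HW]; split; last first.
    move=> p /eqP; rewrite valz => /eqP ->.
    case: HW => [->|H]; [by left | right => q Hq; rewrite H //].
    by rewrite inM_bounds.
  split; first by move=> q /eqP; rewrite valz; apply/negP.
  split; first by move=> q /eqP; rewrite valm => /eqP ->; rewrite Hm.
  move=> j j0 p /eqP; rewrite valz => /eqP ->.
  case: (eqVneq (t z) m) => [Hz|Hzm].
    by left; case: j j0 => [//|j] _; rewrite iterSr Hz iter_m.
  case: HW => [Hz|HW]; first by rewrite Hz eqxx in Hzm.
  case: j j0 => [//|[|j]] _.
    right => q /lt_inM Hq /= E; by rewrite E HW ?eqxx in Hzm.
  left; rewrite !iterSr HW ?iter_m //.
  by rewrite /inM H0.
Qed.

Lemma iterInj (t : trans N) : t m = m -> Inj t -> forall j u v, u <> v -> iter j t u = m \/ iter j t u <> iter j t v.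
Proof.
move=> Hm HI; elim=> [|j IH] u v uv; first by right.
rewrite !iterS; case: (IH u v uv) => [->|H]; first by left.
exact: HI.
Qed.

Lemma V_iff (t : trans N) : V_sf t <-> Vo t.
Proof.
split.
- move=> [HB HV]; have [Hm [H0 _]] := B_Cord HB; split=> //; split=> //.
  move=> u v uv; case: (HV u v uv) => [[Hu _]|H]; [left; apply/val_inj; exact: Hu | by right].
- move=> [Hm [H0 HI]]; split.
  + split; first by move=> q /eqP; rewrite valz; apply/negP.
    split; first by move=> q /eqP; rewrite valm => /eqP ->; rewrite Hm.
    move=> j j0 p /eqP; rewrite valz => /eqP ->.
    case: (eqVneq (iter j t z) m) => [E|E]; first by left; rewrite E.
    right => q Hq Eq.
    have zq : z <> q by move=> Ezq; move: Hq; rewrite -Ezq.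
    by case: (iterInj Hm HI j zq) => [E'|E']; [rewrite E' eqxx in E | exact: E' Eq].
  + move=> p q pq; case: (HI p q pq) => [Hp|Hne]; last by right.
    case: (eqVneq (t q) m) => [Hq|Hq]; first by left; rewrite Hp Hq.
    by right; rewrite Hp => E; rewrite E eqxx in Hq.
Qed.

Lemma Vo_Cord (t : trans N) : Vo t -> Cord t.
Proof.
move=> [Hm [H0 HI]]; split=> //; split=> //.
case: (eqVneq (t z) m) => [->|Hzm]; [by left | right => q /andP[qz qm]].
apply/eqP => E; have qz' : q <> z by apply/eqP.
by case: (HI q z qz') => [Hq|Hq]; [rewrite -E Hq eqxx in Hzm | apply: Hq].
Qed.

Lemma LE_goodN E (t : trans N) : code t \in LE n E = goodN n E (code t).
Proof. by rewrite mem_filter code_gen andbT. Qed.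

Lemma grE_nil a b : grE [::] a b = false.
Proof. by []. Qed.

Lemma E0code (t : trans N) : nth 0 (code t) 0 = val (t z).
Proof. exact: nth_code t z. Qed.

Lemma W_code (t : trans N) : Wo t <-> code t \in LE n [::].
Proof.
rewrite LE_goodN /goodN.
have Hr : resp n [::] (code t) by apply/allP => p _; apply/allP => r _.
rewrite Hr /=; split.
- move=> [HC HW]; apply/andP; split; first exact/Cn_code.
  rewrite /Bc E0code valm; case: HW => [->|HW]; first by rewrite eqxx.
  by apply/orP; right; apply/allIMP => q Hq; rewrite nth_code valm HW ?eqxx.
- move=> /andP[/Cn_code HC Hb]; split=> //; move: Hb.
  rewrite /Bc E0code valm => /orP[/eqP->|/allIMP H]; [by left | right => q Hq].
  by have := H q Hq; rewrite nth_code valm orbF => /eqP.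
Qed.

Lemma grE_pl a b : 0 < a <= n -> 0 < b <= n -> a != b -> grE (pairlist n) a b.
Proof.
move=> /andP[a0 an] /andP[b0 bn] ab; rewrite /grE !mem_pairlist a0 b0 an bn /=.
by case: (ltngtP a b) => // E; rewrite E eqxx in ab.
Qed.

Lemma grE_pl_refl a : grE (pairlist n) a a = false.
Proof. by rewrite /grE orbb mem_pairlist ltnn andbF. Qed.

Lemma V_code (t : trans N) : Vo t <-> code t \in LE n (pairlist n).
Proof.
rewrite LE_goodN /goodN; split.
- move=> HV; have HC := Vo_Cord HV; have [Hm [H0 HI]] := HV.
  apply/andP; split; first exact/Cn_code.
  apply/andP; split.
  + apply/allIMP => p Hp; apply/allIMP => r Hr; rewrite !nth_code valm.
    case: (eqVneq p r) => [->|pr]; first by rewrite grE_pl_refl.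
    have pr' : p <> r by apply/eqP.
    case: (HI p r pr') => [->|Hne]; first by rewrite eqxx !orbT.
    by rewrite (inj_eq val_inj); case: eqP => //= _; rewrite orbT.
  + rewrite /Bc E0code valm; have [_ [_ HCC]] := HC.
    case: HCC => [->|HCC]; first by rewrite eqxx.
    case: (eqVneq (t z) m) => [->|Hzm]; first by [].
    apply/orP; right; apply/allIMP => q Hq; rewrite nth_code valm.
    case: (eqVneq (t q) m) => //= Hqm.
    apply: grE_pl; rewrite -?inM_bounds /inM ?H0 ?Hzm ?Hqm //.
    by rewrite (inj_eq val_inj) eq_sym HCC.
- move=> /andP[/Cn_code HC /andP[Hr _]]; have [Hm [H0 HCC]] := HC.
  split=> //; split=> //.
  have key : forall u v, inM u -> inM v -> u <> v -> t u = m \/ t u <> t v.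
    move=> u v Hu Hv uv; move/allIMP: Hr => /(_ u Hu) /allIMP /(_ v Hv).
    rewrite !nth_code valm grE_pl -?inM_bounds //=; last by rewrite (inj_eq val_inj); apply/eqP.
    case/orP => [|/eqP]; last by left.
    by rewrite (inj_eq val_inj) => /eqP; right.
  move=> u v uv.
  case: (eqVneq u m) => [->|um]; first by left.
  case: (eqVneq v m) => [->|vm].
    by case: (eqVneq (t u) m) => [|Hu]; [left | right; rewrite Hm; apply/eqP].
  case: (eqVneq u z) => [Eu|uz].
    have Hv : inM v by rewrite /inM vm andbT; apply/eqP => E; apply: uv; rewrite Eu E.
    case: HCC => [Hz|HCC]; first by left; rewrite Eu.
    by right; rewrite Eu; apply/eqP; rewrite eq_sym HCC.
  case: (eqVneq v z) => [Ev|vz].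
    have Hu : inM u by rewrite /inM um uz.
    case: HCC => [Hz|HCC].
      by case: (eqVneq (t u) m) => [|Hu']; [left | right; rewrite Ev Hz; apply/eqP].
    by right; rewrite Ev; apply/eqP; rewrite HCC.
  by apply: key => //; rewrite /inM ?um ?uz ?vm ?vz.
Qed.

Lemma Wo_intro (t : trans N) : t m = m -> (forall q, t q != z) -> (t z = m \/ forall q, inM q -> t q = m) -> Wo t.
Proof.
move=> Hm H0 HW; split=> //; split=> //; split=> //.
case: HW => [|HW]; first by left.
case: (eqVneq (t z) m) => [|Hzm]; first by left.
by right => q Hq; rewrite HW // eq_sym.
Qed.

Lemma Wo_comp (t s : trans N) : Wo t -> Wo s -> Wo (tcomp t s).
Proof.
move=> [[Htm [Ht0 _]] HtW] [[Hsm [Hs0 _]] HsW]; apply: Wo_intro.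
- by rewrite ffunE Htm Hsm.
- by move=> q; rewrite ffunE.
- case: HtW => [Hz|HtW]; [left | right => q Hq]; rewrite ffunE ?Hz ?HtW //.
Qed.

Lemma Wo_eqz q : q != z -> Wo (eqz q).
Proof.
move=> qz; apply: Wo_intro.
- by rewrite ffunE eq_sym (negbTE (zm n)).
- by move=> x; rewrite ffunE; case: (x == z) => //; rewrite eq_sym zm.
- by right => x /andP[xz _]; rewrite ffunE (negbTE xz).
Qed.

Lemma fin_z : n != 0 -> fin != z.
Proof.
move=> n0; apply/eqP => H; have := congr1 val H; rewrite /= inordK // => E.
by rewrite E in n0.
Qed.

Lemma Wo_gp p : p != m -> n != 0 -> Wo (gp p).
Proof.
move=> pm n0; apply: Wo_intro.
- by rewrite ffunE eq_sym (negbTE pm).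
- by move=> x; rewrite ffunE; case: (x == p); rewrite ?fin_z // eq_sym zm.
- case: (eqVneq p z) => [Ep|pz].
    by right => x /andP[xz _]; rewrite ffunE Ep (negbTE xz).
  by left; rewrite ffunE eq_sym (negbTE pz).
Qed.

Lemma Vo_comp (t s : trans N) : Vo t -> Vo s -> Vo (tcomp t s).
Proof.
move=> [Htm [Ht0 HtI]] [Hsm [Hs0 HsI]]; split; first by rewrite ffunE Htm Hsm.
split; first by move=> q; rewrite ffunE.
move=> u v uv; rewrite !ffunE.
case: (HtI u v uv) => [->|H]; [by left | exact: HsI].
Qed.

Lemma Vo_eqz q : q != z -> Vo (eqz q).
Proof.
move=> qz; split; first by rewrite ffunE eq_sym (negbTE (zm n)).
split; first by move=> x; rewrite ffunE; case: (x == z) => //; rewrite eq_sym zm.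
move=> u v uv; rewrite !ffunE.
case: (eqVneq u z) => [Eu|uz]; last by left.
have vz : v != z by apply/eqP => E; apply: uv; rewrite Eu E.
rewrite (negbTE vz); case: (eqVneq q m) => [|qm]; [by left | right; exact/eqP].
Qed.

Lemma Vo_gp p : p != m -> n != 0 -> Vo (gp p).
Proof.
move=> pm n0; split; first by rewrite ffunE eq_sym (negbTE pm).
split; first by move=> x; rewrite ffunE; case: (x == p); rewrite ?fin_z // eq_sym zm.
move=> u v uv; rewrite !ffunE.
case: (eqVneq u p) => [Eu|up]; last by left.
have vp : v != p by apply/eqP => E; apply: uv; rewrite Eu E.
by rewrite (negbTE vp); right; apply/eqP; apply: finm.
Qed.

End WV.


Lemma W_unique n Max : checkb n Max [::] -> unique_max_tsg (@W_sf n.+2).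
Proof.
move=> Hc.
have HSo : forall t : trans n.+2, W_sf t <-> code t \in LE n [::].
  move=> t; split=> H; [exact: (proj1 (W_code t)) ((proj1 (W_iff t)) H) | exact: (proj2 (W_iff t)) ((proj2 (W_code t)) H)].
apply: (main_assemble Hc) => //.
  by case: (pairlist n) => //= x s; rewrite mem_cat orbC; apply/orP; left; elim: s {x} => //= y s IH; rewrite mem_cat IH orbT.
apply: (@build n _ (fun t => code t \in LE n [::])) => //.
- by move=> t /W_iff [].
- by move=> t s /W_iff Ht /W_iff Hs; apply/W_iff; apply: Wo_comp.
- by move=> q Hq; apply/W_iff; apply: Wo_eqz.
- by move=> p Hp n0; apply/W_iff; apply: Wo_gp.
Qed.

Lemma pl_allsub n : pairlist n \in allsub (pairlist n).
Proof. by have := filter_allsub predT (pairlist n); rewrite filter_predT. Qed.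

Lemma V_unique n Max : checkb n Max (pairlist n) -> unique_max_tsg (@V_sf n.+2).
Proof.
move=> Hc.
have HSo : forall t : trans n.+2, V_sf t <-> code t \in LE n (pairlist n).
  move=> t; split=> H; [exact: (proj1 (V_code t)) ((proj1 (V_iff t)) H) | exact: (proj2 (V_iff t)) ((proj2 (V_code t)) H)].
apply: (main_assemble Hc) => //; first exact: pl_allsub.
apply: (@build n _ (fun t => code t \in LE n (pairlist n))) => //.
- by move=> t /V_iff /Vo_Cord.
- by move=> t s /V_iff Ht /V_iff Hs; apply/V_iff; apply: Vo_comp.
- by move=> q Hq; apply/V_iff; apply: Vo_eqz.
- by move=> p Hp n0; apply/V_iff; apply: Vo_gp.
Qed.

Lemma c4 : checkb 4 629 [::]. Proof. by vm_compute. Qed.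
Lemma c0 : checkb 0 1 (pairlist 0). Proof. by vm_compute. Qed.
Lemma c1 : checkb 1 3 (pairlist 1). Proof. by vm_compute. Qed.
Lemma c2 : checkb 2 13 (pairlist 2). Proof. by vm_compute. Qed.
Lemma c3 : checkb 3 73 (pairlist 3). Proof. by vm_compute. Qed.

Theorem theorem3 :
  unique_max_tsg (@W_sf 6) /\
  (forall n, 2 <= n <= 5 -> unique_max_tsg (@V_sf n)).
Proof.
split; first exact: W_unique c4.
case=> [|[|[|[|[|[|n]]]]]] //= _.
- exact: V_unique c0.
- exact: V_unique c1.
- exact: V_unique c2.
- exact: V_unique c3.
Qed.
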